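(* Let $\mathrm U\ge0$, $h_b\in[0,1/2]$ and $k\in\mathbb T^2$. If $\lambda\in\rho(A_{1,1}(\mathrm U,k))$ is an eigenvalue of $A(\mathrm U,k)$, then its eigenspace is $\mathbb C\,g(k,\lambda)$, where $$g(k,\lambda):=\big(\hat\upsilon(k)(A_{1,1}(\mathrm U,k)-\lambda\mathfrak 1)^{-1}\mathfrak d(k),\,-1\big)\in\mathcal H.$$ In particular $\lambda$ is a non-degenerate eigenvalue of $A(\mathrm U,k)$.
   Context: Notation: $\mathbb T^2=[-\pi,\pi)^2$ with normalized Haar measure $\nu$; $L^2(\mathbb T^2)=L^2(\mathbb T^2,\nu)$, scalar product antilinear in the first argument. For $f\in\ell^1(\mathbb Z^2)$, $\hat f(k)=\sum_{x}e^{ik\cdot x}f(x)$, $k\in\mathbb R^2$. $\hat{\mathfrak e}_x(p)=e^{ip\cdot x}$; $P_x$ the orthogonal projection onto $\mathbb C\hat{\mathfrak e}_x$; $M_g$ multiplication by $g$; $\cos(q):=\cos q_1+\cos q_2$; $\rho(\cdot)$ denotes the resolvent set. Data: $\epsilon,h_b,\mathrm U\ge0$; $\mathrm u:\mathbb Z^2\to[0,\infty)$, $\upsilon,\mathfrak p_1,\mathfrak p_2:\mathbb Z^2\to\mathbb R$, all invariant under $90^\circ$-rotations, $\mathrm u,\upsilon$ absolutely summable, $\sum_z e^{\alpha_0|z|}|\mathfrak p_j(z)|<\infty$ for some $\alpha_0>0$, $\mathfrak p_2(z)=0$ for $z\notin(2\mathbb Z)^2$, $\mathfrak p_1+\mathfrak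 p_2\neq0$, and for every $k$ some $x$ with $\mathfrak p_2(x)\neq-e^{ik\cdot x/2}\mathfrak p_1(x)$. For $k,p\in\mathbb T^2$: $\mathfrak b(k)=h_b\epsilon(2-\cos k)$, $\mathfrak f(k)(p)=\epsilon(4-\cos(p+k)-\cos p)$, $\mathfrak d(k)(p)=\hat{\mathfrak p}_1(k+p)+\hat{\mathfrak p}_2(k/2+p)$. $A_{1,1}(\mathrm U,k)=M_{\mathfrak f(k)}+\sum_x\mathrm u(x)P_x+\mathrm UP_0$; on $\mathcal H=L^2(\mathbb T^2)\oplus\mathbb C$, $A(\mathrm U,k)(\varphi,z)=\big(A_{1,1}(\mathrm U,k)\varphi+\hat\upsilon(k)z\,\mathfrak d(k),\ \hat\upsilon(k)\langle\mathfrak d(k),\varphi\rangle+\mathfrak b(k)z\big)$. *)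

(* Defs.v *)
From HB Require Import structures.
From mathcomp Require Import all_boot all_order all_algebra.
From mathcomp Require Import all_classical all_reals all_analysis.
From mathcomp Require Import complex.
Set Implicit Arguments.
Unset Strict Implicit.
Unset Printing Implicit Defensive.
Import Order.TTheory GRing.Theory Num.Theory.
Local Open Scope classical_set_scope.
Local Open Scope ring_scope.

Section Defs.
Context {R : realType}.
Local Notation C := R[i].

Definition cexpi (t : R) : C := (cos t +i* sin t)%C.

Definition dotZ (k : R * R) (x : int * int) : R :=
  k.1 * x.1%:~R + k.2 * x.2%:~R.

Definition normZ2 (x : int * int) : R :=
  Num.sqrt (x.1%:~R ^+ 2 + x.2%:~R ^+ 2).

Definition rot90 (x : int * int) : int * int := (- x.2, x.1)%R.

Definition rot_invariant (f : int * int -> R) : Prop :=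
  forall x, f (rot90 x) = f x.

Definition abs_summable (f : int * int -> R) : Prop :=
  (\esum_(x in [set: int * int]) (`|f x|)%:E < +oo)%E.

Definition rsum (f : int * int -> R) : R :=
  fine (\esum_(x in [set: int * int]) (Num.max (f x) 0)%:E)
  - fine (\esum_(x in [set: int * int]) (Num.max (- f x) 0)%:E).

Definition csum (f : int * int -> C) : C :=
  (rsum (fun x => complex.Re (f x)) +i* rsum (fun x => complex.Im (f x)))%C.

Definition fhat (f : int * int -> R) (k : R * R) : C :=
  csum (fun x => cexpi (dotZ k x) * (f x)%:C%C).

Definition T2 : set (R * R) :=
  [set p | (- pi <= p.1 < pi) /\ (- pi <= p.2 < pi)].

Definition lam2 := ((@lebesgue_measure R) \x (@lebesgue_measure R))%E.

(** integral w.r.t. the normalized Haar measure nu on T^2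
    (nu = Lebesgue measure on [-pi,pi)^2 divided by 4 pi^2),
    for complex valued functions *)
Definition cint (f : R * R -> C) : C :=
  ((Rintegral lam2 T2 (fun p => complex.Re (f p)) / (4 * pi ^+ 2))
   +i* (Rintegral lam2 T2 (fun p => complex.Im (f p)) / (4 * pi ^+ 2)))%C.

Definition csq (z : C) : R := complex.Re z ^+ 2 + complex.Im z ^+ 2.

(** phi is (a representative of) an element of L^2(T^2, nu) *)
Definition L2 (phi : R * R -> C) : Prop :=
  measurable_fun T2 (fun p => complex.Re (phi p)) /\
  measurable_fun T2 (fun p => complex.Im (phi p)) /\
  (\int[lam2]_(p in T2) (csq (phi p))%:E < +oo)%E.

(** equality in L^2(T^2): equality nu-almost everywhere *)
Definition aeq (phi psi : R * R -> C) : Prop :=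
  {ae lam2, forall p, T2 p -> phi p = psi p}.

Definition l2norm (phi : R * R -> C) : R :=
  Num.sqrt (Rintegral lam2 T2 (fun p => csq (phi p)) / (4 * pi ^+ 2)).

(** scalar product, antilinear in the first argument *)
Definition ip (phi psi : R * R -> C) : C := cint (fun p => (phi p)^* * psi p)%C.

Definition ehat (x : int * int) : R * R -> C := fun p => cexpi (dotZ p x).

Definition Pproj (x : int * int) (phi : R * R -> C) : R * R -> C :=
  fun p => ip (ehat x) phi * ehat x p.

Definition cos2 (q : R * R) : R := cos q.1 + cos q.2.

Definition bfun (eps hb : R) (k : R * R) : R := hb * eps * (2 - cos2 k).

Definition ffun (eps : R) (k : R * R) (p : R * R) : R :=
  eps * (4 - cos2 (p.1 + k.1, p.2 + k.2) - cos2 p).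

Definition dfun (p1 p2 : int * int -> R) (k : R * R) : R * R -> C :=
  fun p => fhat p1 (k.1 + p.1, k.2 + p.2) + fhat p2 (k.1 / 2 + p.1, k.2 / 2 + p.2).

Definition A11 (eps : R) (u : int * int -> R) (U : R) (k : R * R)
  (phi : R * R -> C) : R * R -> C :=
  fun p => (ffun eps k p)%:C%C * phi p
           + csum (fun x => (u x)%:C%C * Pproj x phi p)
           + U%:C%C * Pproj (0, 0) phi p.

(** A(U,k) on H = L^2(T^2) (+) C, first and second components *)
Definition A_1 (eps : R) (u : int * int -> R) (U : R) (ups p1 p2 : int * int -> R)
  (k : R * R) (phi : R * R -> C) (z : C) : R * R -> C :=
  fun p => A11 eps u U k phi p + fhat ups k * z * dfun p1 p2 k p.

Definition A_2 (eps hb : R) (ups p1 p2 : int * int -> R)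
  (k : R * R) (phi : R * R -> C) (z : C) : C :=
  fhat ups k * ip (dfun p1 p2 k) phi + (bfun eps hb k)%:C%C * z.

(** lam is in the resolvent set of the (bounded) operator T on L^2(T^2):
    T - lam is bijective on L^2 (modulo a.e. equality) with bounded inverse *)
Definition in_resolvent (T : (R * R -> C) -> R * R -> C) (lam : C) : Prop :=
  [/\ (forall phi, L2 phi -> aeq (fun p => T phi p - lam * phi p) (fun _ => 0) ->
                   aeq phi (fun _ => 0)),
      (forall psi, L2 psi -> exists phi, L2 phi /\
                   aeq (fun p => T phi p - lam * phi p) psi) &
      (exists M : R, forall phi, L2 phi ->
                   l2norm phi <= M * l2norm (fun p => T phi p - lam * phi p))].

Definition A_eigeq (eps hb : R) (u : int * int -> R) (U : R)
  (ups p1 p2 : int * int -> R) (k : R * R) (lam : C) (phi : R * R -> C) (z : C) : Prop :=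
  aeq (A_1 eps u U ups p1 p2 k phi z) (fun p => lam * phi p) /\
  A_2 eps hb ups p1 p2 k phi z = lam * z.

Definition A_eigenvalue (eps hb : R) (u : int * int -> R) (U : R)
  (ups p1 p2 : int * int -> R) (k : R * R) (lam : C) : Prop :=
  exists (phi : R * R -> C) (z : C), L2 phi /\
    ~ (aeq phi (fun _ => 0) /\ z = 0) /\ A_eigeq eps hb u U ups p1 p2 k lam phi z.

End Defs.

(* Main.v *)
Require Import Defs.
From HB Require Import structures.
From mathcomp Require Import all_boot all_order all_algebra.
From mathcomp Require Import all_classical all_reals all_analysis.
From mathcomp Require Import complex.
From mathcomp Require Import measurable_realfun.
From mathcomp Require Import ring lra.
Import Order.TTheory GRing.Theory Num.Theory.
Import numFieldNormedType.Exports.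
Local Open Scope classical_set_scope.
Local Open Scope ring_scope.
HB.instance Definition _ := isPointed.Build int 0%Z.
Section S.
Context {R : realType}.
Local Notation C := R[i].
Lemma ReM (x y : C) : complex.Re (x * y) = complex.Re x * complex.Re y - complex.Im x * complex.Im y.
Proof. by case: x => a b; case: y => c d. Qed.
Lemma ImM (x y : C) : complex.Im (x * y) = complex.Re x * complex.Im y + complex.Im x * complex.Re y.
Proof. by case: x => a b; case: y => c d. Qed.
Lemma ReD (x y : C) : complex.Re (x + y) = complex.Re x + complex.Re y.
Proof. by case: x => a b; case: y => c d. Qed.
Lemma ImD (x y : C) : complex.Im (x + y) = complex.Im x + complex.Im y.
Proof. by case: x => a b; case: y => c d. Qed.
Lemma ReB (x y : C) : complex.Re (x - y) = complex.Re x - complex.Re y.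
Proof. by case: x => a b; case: y => c d. Qed.
Lemma ImB (x y : C) : complex.Im (x - y) = complex.Im x - complex.Im y.
Proof. by case: x => a b; case: y => c d. Qed.
Lemma Rec (r : R) : complex.Re (r%:C)%C = r. Proof. by []. Qed.
Lemma Imc (r : R) : complex.Im (r%:C)%C = 0. Proof. by []. Qed.
Lemma Re0 : complex.Re (0 : C) = 0. Proof. by []. Qed.
Lemma Im0 : complex.Im (0 : C) = 0. Proof. by []. Qed.
Lemma Reconj (x : C) : complex.Re (x^*)%C = complex.Re x. Proof. by case: x. Qed.
Lemma Imconj (x : C) : complex.Im (x^*)%C = - complex.Im x. Proof. by case: x. Qed.
Lemma ceqP (x y : C) : complex.Re x = complex.Re y -> complex.Im x = complex.Im y -> x = y.
Proof. by case: x => a b; case: y => c d /= -> ->. Qed.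
Lemma ReE (a b : R) : complex.Re (a +i* b)%C = a. Proof. by []. Qed.
Lemma ImE (a b : R) : complex.Im (a +i* b)%C = b. Proof. by []. Qed.
Lemma ReN1 : complex.Re (-1 : C) = -1. Proof. by []. Qed.
Lemma enumZ2 : exists e : nat -> int * int, set_bij [set: nat] [set: int * int] e.
Proof.
have inf : infinite_set [set: int * int].
  apply/infiniteP. apply/pcard_injP. exists (fun n : nat => (n%:Z, 0%Z)).
  by move=> m n _ _ [].
apply/card_set_bijP.
exact: (card_esym (eq_card_nat (countableP _) inf)).
Qed.

Definition ez : nat -> int * int := proj1_sig (cid enumZ2).
Lemma ez_bij : set_bij [set: nat] [set: int * int] ez.
Proof. exact: (proj2_sig (cid enumZ2)). Qed.

Local Open Scope ereal_scope.
Lemma esum_series (a : int * int -> \bar R) : (forall x, 0 <= a x) ->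
  \esum_(x in [set: int * int]) a x = \sum_(i <oo) a (ez i).
Proof.
move=> a0; rewrite (@reindex_esum _ _ _ _ _ _ a ez_bij) nneseries_esumT //.
Qed.

Lemma esumZ (c : R) (a : int * int -> \bar R) : (0 <= c)%R -> (forall x, 0 <= a x) ->
  \esum_(x in [set: int * int]) (c%:E * a x) = c%:E * \esum_(x in [set: int * int]) a x.
Proof.
move=> c0 a0; rewrite !esum_series //; last by move=> x; rewrite mule_ge0.
by rewrite nneseriesZl.
Qed.

Lemma esum_meas d (T : measurableType d) (D : set T) (h : int * int -> T -> \bar R) :
  measurable D -> (forall x p, 0 <= h x p) -> (forall x, measurable_fun D (h x)) ->
  measurable_fun D (fun p => \esum_(x in [set: int * int]) h x p).
Proof.
move=> mD h0 mh.
have -> : (fun p => \esum_(x in [set: int * int]) h x p) = 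
  (fun p => \sum_(i <oo | i \in predT) h (ez i) p).
  by apply/funext => p; rewrite esum_series.
by apply: ge0_emeasurable_sum => //.
Qed.

Lemma esum_ge0' (a : int * int -> R) : (forall x, 0 <= a x)%R ->
  0 <= \esum_(x in [set: int * int]) (a x)%:E.
Proof. by move=> a0; apply: esum_ge0 => x _; rewrite lee_fin. Qed.

Lemma esum_fin (a b : int * int -> R) : (forall x, 0 <= a x <= b x)%R ->
  abs_summable b -> \esum_(x in [set: int * int]) (a x)%:E \is a fin_num.
Proof.
move=> ab bs; rewrite ge0_fin_numE; last by apply: esum_ge0' => x; case/andP: (ab x).
apply: le_lt_trans bs; apply: le_esum => x _; rewrite lee_fin.
case/andP: (ab x) => a0 ab'; apply: (le_trans ab'); exact: ler_norm.
Qed.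

Lemma abs_summable_le (f g : int * int -> R) (c : R) : (0 <= c)%R ->
  (forall x, `|f x| <= c * `|g x|)%R -> abs_summable g -> abs_summable f.
Proof.
move=> c0 fg gs; rewrite /abs_summable.
apply: (@le_lt_trans _ _ (\esum_(x in [set: int * int]) (c%:E * (`|g x|)%:E))).
  by apply: le_esum => x _; rewrite -EFinM lee_fin.
have g0 : forall x, (0 <= (`|g x|)%:E).
  by move=> x; rewrite lee_fin.
rewrite (esumZ c _ c0 g0).
by apply: lte_mul_pinfty; rewrite ?lee_fin.
Qed.

Lemma abs_summableD (f g : int * int -> R) : abs_summable f -> abs_summable g ->
  abs_summable (fun x => f x + g x)%R.
Proof.
move=> fs gs; rewrite /abs_summable.
apply: (@le_lt_trans _ _ (\esum_(x in [set: int * int]) ((`|f x|)%:E + (`|g x|)%:E))).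
  by apply: le_esum => x _; rewrite -EFinD lee_fin ler_normD.
by rewrite esumD // ?lte_add_pinfty // => x _; rewrite lee_fin.
Qed.

Local Close Scope ereal_scope.

Lemma rsum_dec (f P N : int * int -> R) : (forall x, 0 <= P x) -> (forall x, 0 <= N x) ->
  abs_summable P -> abs_summable N -> (forall x, f x = P x - N x) ->
  rsum f = fine (\esum_(x in [set: int * int]) (P x)%:E) - fine (\esum_(x in [set: int * int]) (N x)%:E).
Proof.
move=> P0 N0 Ps Ns fPN; rewrite /rsum.
have fE1 : \esum_(x in [set: int * int]) (Num.max (f x) 0)%:E \is a fin_num.
  apply: (@esum_fin _ P _ Ps) => x; rewrite le_max lexx orbT /= ge_max P0 andbT fPN.
  by rewrite lerBlDr lerDl.
have fE2 : \esum_(x in [set: int * int]) (Num.max (- f x) 0)%:E \is a fin_num.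
  apply: (@esum_fin _ N _ Ns) => x; rewrite le_max lexx orbT /= ge_max N0 andbT fPN.
  by rewrite opprB lerBlDr lerDl.
have fP : \esum_(x in [set: int * int]) (P x)%:E \is a fin_num.
  by apply: (@esum_fin _ P _ Ps) => x; rewrite P0 lexx.
have fN : \esum_(x in [set: int * int]) (N x)%:E \is a fin_num.
  by apply: (@esum_fin _ N _ Ns) => x; rewrite N0 lexx.
have key : (\esum_(x in [set: int * int]) (Num.max (f x) 0)%:E +
            \esum_(x in [set: int * int]) (N x)%:E =
            \esum_(x in [set: int * int]) (Num.max (- f x) 0)%:E +
            \esum_(x in [set: int * int]) (P x)%:E)%E.
  rewrite -!esumD; try by move=> x _; rewrite lee_fin ?le_max ?lexx ?orbT.
  apply: eq_esum => x _; rewrite -!EFinD; congr (_%:E).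
  rewrite fPN; case: (leP 0 (P x - N x)) => h.
    rewrite (max_idPr _); last by rewrite oppr_le0.
    by rewrite add0r subrK.
  rewrite (max_idPl _); last by rewrite oppr_ge0 ltW.
  by rewrite add0r opprB subrK.
have := congr1 fine key; rewrite !fineD // => h.
by lra.
Qed.

Lemma rsum_def (f : int * int -> R) : rsum f = fine (\esum_(x in [set: int * int]) (Num.max (f x) 0)%:E) - fine (\esum_(x in [set: int * int]) (Num.max (- f x) 0)%:E).
Proof. by []. Qed.

Lemma abs_summable_pos (f : int * int -> R) : abs_summable f -> abs_summable (fun x => Num.max (f x) 0).
Proof.
move=> fs; apply: (abs_summable_le _ _ 1 ler01 _ fs) => x; rewrite mul1r.
rewrite ger0_norm ?le_max ?lexx ?orbT // ge_max normr_ge0 andbT; exact: ler_norm.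
Qed.
Lemma abs_summable_neg (f : int * int -> R) : abs_summable f -> abs_summable (fun x => Num.max (- f x) 0).
Proof.
move=> fs; apply: (abs_summable_le _ _ 1 ler01 _ fs) => x; rewrite mul1r.
rewrite ger0_norm ?le_max ?lexx ?orbT // ge_max normr_ge0 andbT -normrN; exact: ler_norm.
Qed.

Lemma fin_pos (f : int * int -> R) : abs_summable f -> \esum_(x in [set: int * int]) (Num.max (f x) 0)%:E \is a fin_num.
Proof.
move=> fs; apply: (@esum_fin _ (fun x => Num.max (f x) 0)); [by move=> x; rewrite lexx le_max lexx orbT| exact: abs_summable_pos].
Qed.
Lemma fin_neg (f : int * int -> R) : abs_summable f -> \esum_(x in [set: int * int]) (Num.max (- f x) 0)%:E \is a fin_num.
Proof.
move=> fs; apply: (@esum_fin _ (fun x => Num.max (- f x) 0)); [by move=> x; rewrite lexx le_max lexx orbT| exact: abs_summable_neg].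
Qed.

Lemma rsumD (f g : int * int -> R) : abs_summable f -> abs_summable g ->
  rsum (fun x => f x + g x) = rsum f + rsum g.
Proof.
move=> fs gs.
rewrite (@rsum_dec _ (fun x => Num.max (f x) 0 + Num.max (g x) 0) (fun x => Num.max (- f x) 0 + Num.max (- g x) 0)).
- rewrite !rsum_def. under eq_esum do rewrite EFinD. under [X in _ - fine X = _]eq_esum do rewrite EFinD. rewrite !esumD; try by move=> x _; rewrite lee_fin le_max lexx orbT.
  rewrite !fineD ?fin_neg ?fin_pos //; lra.
- by move=> x; rewrite addr_ge0 // le_max lexx orbT.
- by move=> x; rewrite addr_ge0 // le_max lexx orbT.
- by apply: abs_summableD; apply: abs_summable_pos.
- by apply: abs_summableD; apply: abs_summable_neg.
- move=> x. 
  have E : forall y : R, y = Num.max y 0 - Num.max (- y) 0.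
    move=> y; case: (leP 0 y) => h.
      by rewrite (max_idPr _) ?subr0 // oppr_le0.
    by rewrite (max_idPl _) ?sub0r ?opprK // oppr_ge0 ltW.
  by rewrite {1}(E (f x)) {1}(E (g x)); ring.
Qed.

Lemma abs_summableZ (f : int * int -> R) (r : R) : abs_summable f -> abs_summable (fun x => r * f x).
Proof.
move=> fs; apply: (abs_summable_le _ _ `|r| (normr_ge0 _) _ fs) => x.
by rewrite normrM.
Qed.

Lemma rsumZ (f : int * int -> R) (r : R) : abs_summable f ->
  rsum (fun x => r * f x) = r * rsum f.
Proof.
move=> fs; have [r0|r0] := leP 0 r.
  rewrite (@rsum_dec _ (fun x => r * Num.max (f x) 0) (fun x => r * Num.max (- f x) 0)).
  - rewrite rsum_def. under eq_esum do rewrite EFinM. under [X in _ - fine X = _]eq_esum do rewrite EFinM.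
    rewrite !esumZ //; try (by move=> x; rewrite lee_fin le_max lexx orbT).
    rewrite !fineM ?fin_neg ?fin_pos //=; lra.
  - by move=> x; rewrite mulr_ge0 // le_max lexx orbT.
  - by move=> x; rewrite mulr_ge0 // le_max lexx orbT.
  - by apply: abs_summableZ; apply: abs_summable_pos.
  - by apply: abs_summableZ; apply: abs_summable_neg.
  - move=> x. case: (leP 0 (f x)) => h.
      by rewrite (max_idPr _) ?mulr0 ?subr0 // oppr_le0.
    by rewrite (max_idPl _) ?mulr0 ?sub0r ?mulrN ?opprK // oppr_ge0 ltW.
rewrite (@rsum_dec _ (fun x => (- r) * Num.max (- f x) 0) (fun x => (- r) * Num.max (f x) 0)).
- rewrite rsum_def. under eq_esum do rewrite EFinM. under [X in _ - fine X = _]eq_esum do rewrite EFinM.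
  rewrite !esumZ ?oppr_ge0 ?(ltW r0) //; try (by move=> x; rewrite lee_fin le_max lexx orbT).
  rewrite !fineM ?fin_neg ?fin_pos //=; lra.
- by move=> x; rewrite mulr_ge0 // ?oppr_ge0 ?(ltW r0) // le_max lexx orbT.
- by move=> x; rewrite mulr_ge0 // ?oppr_ge0 ?(ltW r0) // le_max lexx orbT.
- by apply: abs_summableZ; apply: abs_summable_neg.
- by apply: abs_summableZ; apply: abs_summable_pos.
- move=> x. case: (leP 0 (f x)) => h.
    by rewrite (max_idPr _) ?mulr0 ?sub0r ?mulNr ?opprK // oppr_le0.
  rewrite (max_idPl _); first by ring. by rewrite oppr_ge0 ltW.
Qed.

Lemma rsum0 : rsum (fun _ : int * int => 0 : R) = 0.
Proof. by rewrite /rsum oppr0 maxxx esum1 // subrr. Qed.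

Lemma rsum_ext (f g : int * int -> R) : (forall x, f x = g x) -> rsum f = rsum g.
Proof. by move=> fg; congr rsum; apply/funext. Qed.

Definition csummable (a : int * int -> C) :=
  abs_summable (fun x => complex.Re (a x)) /\ abs_summable (fun x => complex.Im (a x)).

Lemma csum_lin (a b : int * int -> C) (s : C) : csummable a -> csummable b ->
  csum (fun x => a x + s * b x) = csum a + s * csum b.
Proof.
move=> [ar ai] [br bi]; rewrite /csum; apply: ceqP.
- rewrite ReD ReM /= (@rsum_ext _ (fun x => complex.Re (a x) + (complex.Re s * complex.Re (b x) + (- complex.Im s) * complex.Im (b x)))); last first.
    by move=> x; rewrite ReD ReM; ring.
  rewrite rsumD //; last by apply: abs_summableD; apply: abs_summableZ.
  rewrite rsumD; try by apply: abs_summableZ.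
  rewrite !rsumZ //; ring.
- rewrite ImD ImM /= (@rsum_ext _ (fun x => complex.Im (a x) + (complex.Re s * complex.Im (b x) + complex.Im s * complex.Re (b x)))); last first.
    by move=> x; rewrite ImD ImM.
  rewrite rsumD //; last by apply: abs_summableD; apply: abs_summableZ.
  rewrite rsumD; try by apply: abs_summableZ.
  rewrite !rsumZ //.
Qed.

Lemma csum0 (a : int * int -> C) : (forall x, a x = 0) -> csum a = 0.
Proof.
move=> a0; rewrite /csum (@rsum_ext _ (fun _ => 0)) ?(@rsum_ext (fun x => complex.Im (a x)) (fun _ => 0)) ?rsum0 //.
- by move=> x; rewrite a0.
- by move=> x; rewrite a0.
Qed.
Lemma mT2 : measurable (@T2 R).
Proof.
rewrite /T2.
have -> : [set p : R * R | (- pi <= p.1 < pi) /\ (- pi <= p.2 < pi)] = `[-pi, pi[%classic `*` `[-pi, pi[%classic.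
  by apply/seteqP; split => p /=; rewrite !in_itv /=.
apply: measurableX => //.
Qed.
Lemma mdot (x : int * int) : measurable_fun setT (fun p : R * R => dotZ p x).
Proof.
rewrite /dotZ. apply: measurable_funD.
  by apply: measurable_funM; [exact: measurable_fst|exact: measurable_cst].
by apply: measurable_funM; [exact: measurable_snd|exact: measurable_cst].
Qed.
Lemma mcos (f : R * R -> R) : measurable_fun setT f -> measurable_fun setT (fun p => cos (f p)).
Proof. move=> mf. exact: (measurableT_comp (continuous_measurable_fun (@continuous_cos R)) mf). Qed.
Lemma msin (f : R * R -> R) : measurable_fun setT f -> measurable_fun setT (fun p => sin (f p)).
Proof. move=> mf. exact: (measurableT_comp (continuous_measurable_fun (@continuous_sin R)) mf). Qed.

Local Notation mu := (@lam2 R).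
Local Notation NN := (4 * pi ^+ 2 : R).

Lemma lam2T2 : (mu T2 < +oo)%E.
Proof.
have -> : (@T2 R) = `[-pi, pi[%classic `*` `[-pi, pi[%classic.
  by apply/seteqP; split => p /=; rewrite !in_itv /=.
rewrite /lam2 product_measure1E //. have L := @lebesgue_measure_itv R `[(- pi)%R, pi[. rewrite /= in L. rewrite -[X in (X * _)%E]/(lebesgue_measure _) -[X in (_ * X)%E]/(lebesgue_measure _) L.
by case: ifP => _; rewrite ?mul0e -?EFinM ?ltry.
Qed.

Lemma NN_gt0 : 0 < NN.
Proof. by rewrite mulr_gt0 // exprn_gt0 // pi_gt0. Qed.

Definition intg (f : R * R -> R) := mu.-integrable T2 (EFin \o f).

Lemma intg_cst (c : R) : intg (fun _ => c).
Proof.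
apply/integrableP; split; first exact/measurable_EFinP/measurable_cst.
rewrite (_ : (fun x => `|(EFin \o (fun=> c)) x|%E) = cst (`|c|%:E)); last by apply/funext.
rewrite integral_cst; last exact: mT2.
by apply: lte_mul_pinfty => //; exact: lam2T2.
Qed.

Lemma intgD (f g : R * R -> R) : intg f -> intg g -> intg (fun p => f p + g p).
Proof.
move=> hf hg; rewrite /intg; have -> : EFin \o (fun p => f p + g p) = (EFin \o f) \+ (EFin \o g).
  by apply/funext => p /=; rewrite EFinD.
by apply: integrableD => //; exact: mT2.
Qed.

Lemma intgZ (f : R * R -> R) (k : R) : intg f -> intg (fun p => k * f p).
Proof.
move=> hf; rewrite /intg; have -> : EFin \o (fun p => k * f p) = (fun p => (k%:E * (EFin \o f) p)%E).
  by apply/funext => p /=; rewrite EFinM.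
by apply: integrableZl => //; exact: mT2.
Qed.

Lemma intg_le (f g : R * R -> R) : measurable_fun T2 f -> intg g -> (forall p, T2 p -> `|f p| <= g p) -> intg f.
Proof.
move=> mf hg fg; apply: (@le_integrable _ _ _ lam2 T2 mT2 _ _ _ _ hg).
- exact/measurable_EFinP.
- move=> p Tp /=; rewrite lee_fin (le_trans (fg p Tp)) //.
  by rewrite ler_norm.
Qed.

Lemma csq_ge0 (z : C) : 0 <= csq z.
Proof. by rewrite /csq addr_ge0 // sqr_ge0. Qed.

Lemma intg_csq phi : L2 phi -> intg (fun p => csq (phi p)).
Proof.
move=> [mr [mi fin]]; apply/integrableP; split.
  apply/measurable_EFinP; rewrite /csq.
  by apply: measurable_funD; apply: measurable_funX.
rewrite (_ : (fun x => `|(EFin \o (fun p => csq (phi p))) x|%E) = (fun p => (csq (phi p))%:E)) //.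
by apply/funext => p /=; rewrite ger0_norm // csq_ge0.
Qed.

Definition Bd (phi : R * R -> C) (p : R * R) : R := 2 + csq (phi p).

Lemma intg_Bd phi : L2 phi -> intg (Bd phi).
Proof. by move=> h; apply: intgD; [exact: intg_cst | exact: intg_csq]. Qed.

Lemma abs_le_sq (a : R) : `|a| <= 1 + a ^+ 2.
Proof. case: (leP 0 a) => h; [rewrite ger0_norm // | rewrite ltr0_norm //]; nra. Qed.

Definition good (e : R * R -> C) (M : R) :=
  [/\ measurable_fun T2 (fun p => complex.Re (e p)), measurable_fun T2 (fun p => complex.Im (e p)),
      0 <= M & forall p, T2 p -> `|complex.Re (e p)| <= M /\ `|complex.Im (e p)| <= M].

Lemma Re_cm (e phi : R * R -> C) : (fun p => complex.Re ((e p)^* * phi p)%C) =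
  (fun p => complex.Re (e p) * complex.Re (phi p) + complex.Im (e p) * complex.Im (phi p)).
Proof. by apply/funext => p; rewrite ReM Reconj Imconj; ring. Qed.
Lemma Im_cm (e phi : R * R -> C) : (fun p => complex.Im ((e p)^* * phi p)%C) =
  (fun p => complex.Re (e p) * complex.Im (phi p) - complex.Im (e p) * complex.Re (phi p)).
Proof. by apply/funext => p; rewrite ImM Reconj Imconj; ring. Qed.

Lemma meas_Re_cm e phi M : good e M -> L2 phi -> measurable_fun T2 (fun p => complex.Re ((e p)^* * phi p)%C).
Proof.
move=> [me1 me2 M0 eM] [mr [mi _]]; rewrite Re_cm.
by apply: measurable_funD; apply: measurable_funM.
Qed.
Lemma meas_Im_cm e phi M : good e M -> L2 phi -> measurable_fun T2 (fun p => complex.Im ((e p)^* * phi p)%C).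
Proof.
move=> [me1 me2 M0 eM] [mr [mi _]]; rewrite Im_cm.
by apply: measurable_funB; apply: measurable_funM.
Qed.

Lemma bound_cm e phi M p : good e M -> T2 p ->
  `|complex.Re ((e p)^* * phi p)%C| <= M * Bd phi p /\ `|complex.Im ((e p)^* * phi p)%C| <= M * Bd phi p.
Proof.
move=> [me1 me2 M0 eM] Tp; have [h1 h2] := eM p Tp.
have a1 := abs_le_sq (complex.Re (phi p)); have a2 := abs_le_sq (complex.Im (phi p)).
have := congr1 (fun f => f p) (Re_cm e phi); have := congr1 (fun f => f p) (Im_cm e phi); move=> /= -> ->.
rewrite /Bd /csq; split.
- apply: (le_trans (ler_normD _ _)); rewrite !normrM.
  have := normr_ge0 (complex.Re (phi p)); have := normr_ge0 (complex.Im (phi p)).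
  have := normr_ge0 (complex.Re (e p)); have := normr_ge0 (complex.Im (e p)). nra.
- apply: (le_trans (ler_normB _ _)); rewrite !normrM.
  have := normr_ge0 (complex.Re (phi p)); have := normr_ge0 (complex.Im (phi p)).
  have := normr_ge0 (complex.Re (e p)); have := normr_ge0 (complex.Im (e p)). nra.
Qed.

Lemma intg_Re_cm e phi M : good e M -> L2 phi -> intg (fun p => complex.Re ((e p)^* * phi p)%C).
Proof.
move=> ge hphi; apply: (@intg_le _ (fun p => M * Bd phi p)); first exact: meas_Re_cm ge hphi.
  by apply: intgZ; exact: intg_Bd.
by move=> p Tp; case: (@bound_cm e phi M p ge Tp).
Qed.
Lemma intg_Im_cm e phi M : good e M -> L2 phi -> intg (fun p => complex.Im ((e p)^* * phi p)%C).
Proof.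
move=> ge hphi; apply: (@intg_le _ (fun p => M * Bd phi p)); first exact: meas_Im_cm ge hphi.
  by apply: intgZ; exact: intg_Bd.
by move=> p Tp; case: (@bound_cm e phi M p ge Tp).
Qed.

Local Notation RI := (Rintegral lam2 T2).

Lemma RD (f g : R * R -> R) : intg f -> intg g -> RI (fun p => f p + g p) = RI f + RI g.
Proof. by move=> hf hg; exact: (@RintegralD _ _ _ lam2 T2 f g mT2 hf hg). Qed.
Lemma RZ (f : R * R -> R) r : intg f -> RI (fun p => r * f p) = r * RI f.
Proof. by move=> hf; exact: (@RintegralZl _ _ _ lam2 T2 f r mT2 hf). Qed.
Lemma RI_ext (f g : R * R -> R) : (forall p, f p = g p) -> RI f = RI g.
Proof. by move=> fg; congr RI; apply/funext. Qed.

Lemma ip_lin e M phi psi s : good e M -> L2 phi -> L2 psi ->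
  ip e (fun p => phi p + s * psi p) = ip e phi + s * ip e psi.
Proof.
move=> ge hphi hpsi; rewrite /ip /cint.
have iX := @intg_Re_cm e phi M ge hphi; have iY := @intg_Im_cm e phi M ge hphi.
have iX' := @intg_Re_cm e psi M ge hpsi; have iY' := @intg_Im_cm e psi M ge hpsi.
apply: ceqP.
- rewrite ReD ReM /=.
  rewrite (@RI_ext _ (fun p => complex.Re ((e p)^* * phi p)%C + (complex.Re s * complex.Re ((e p)^* * psi p)%C + (- complex.Im s) * complex.Im ((e p)^* * psi p)%C))); last first.
    by move=> p; rewrite mulrDr mulrCA ReD [complex.Re (s * _)]ReM mulNr.
  rewrite RD //; last by apply: intgD; apply: intgZ.
  rewrite RD; try by apply: intgZ.
  rewrite !RZ //; ring.
- rewrite ImD ImM /=.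
  rewrite (@RI_ext _ (fun p => complex.Im ((e p)^* * phi p)%C + (complex.Re s * complex.Im ((e p)^* * psi p)%C + complex.Im s * complex.Re ((e p)^* * psi p)%C))); last first.
    by move=> p; rewrite mulrDr mulrCA ImD [complex.Im (s * _)]ImM.
  rewrite RD //; last by apply: intgD; apply: intgZ.
  rewrite RD; try by apply: intgZ.
  rewrite !RZ //; ring.
Qed.

Lemma aeS (P Q : R * R -> Prop) : (forall p, P p -> Q p) -> {ae lam2, forall p, P p} -> {ae lam2, forall p, Q p}.
Proof. move=> PQ; exact: (@filterS _ _ (ae_filter_ringOfSetsType lam2) P Q PQ). Qed.
Lemma aeS2 (P Q S : R * R -> Prop) : (forall p, P p -> Q p -> S p) -> {ae lam2, forall p, P p} -> {ae lam2, forall p, Q p} -> {ae lam2, forall p, S p}.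
Proof. move=> PQ; exact: (@filterS2 _ _ (ae_filter_ringOfSetsType lam2) P Q S PQ). Qed.
Lemma aeS3 (P Q S V : R * R -> Prop) : (forall p, P p -> Q p -> S p -> V p) -> {ae lam2, forall p, P p} -> {ae lam2, forall p, Q p} -> {ae lam2, forall p, S p} -> {ae lam2, forall p, V p}.
Proof. move=> PQ; exact: (@filterS3 _ _ (ae_filter_ringOfSetsType lam2) P Q S V PQ). Qed.

Lemma RI_ae0 (f : R * R -> R) : measurable_fun T2 f -> {ae lam2, forall p, T2 p -> f p = 0} -> RI f = 0.
Proof.
move=> mf h; rewrite /Rintegral (@ae_eq_integral _ _ _ lam2 T2 (cst 0%E)) ?integral0 //.
- exact: mT2.
- exact/measurable_EFinP.
- by apply: aeS h => p hp Tp; rewrite /= hp.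
Qed.

Lemma ip_ae0 e M w : good e M -> L2 w -> aeq w (fun _ => 0) -> ip e w = 0.
Proof.
move=> ge hw h0; rewrite /ip /cint !RI_ae0 ?mul0r //.
- exact: (@meas_Im_cm e w M).
- by apply: aeS h0 => p hp Tp; rewrite hp // mulr0.
- exact: (@meas_Re_cm e w M).
- by apply: aeS h0 => p hp Tp; rewrite hp // mulr0.
Qed.

Lemma RI_abs_le (f g : R * R -> R) : intg f -> intg g -> (forall p, T2 p -> `|f p| <= g p) -> `|RI f| <= RI g.
Proof.
move=> hf hg fg; rewrite ler_norml; apply/andP; split.
  rewrite lerNl -mulN1r -RZ //.
  apply: (@le_Rintegral _ _ _ lam2 T2 _ _ mT2) => //; first exact: intgZ.
  by move=> p Tp; rewrite mulN1r; have := fg p Tp; rewrite ler_norml => /andP[]; rewrite lerNl.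
apply: (@le_Rintegral _ _ _ lam2 T2 _ _ mT2) => //.
by move=> p Tp; have := fg p Tp; rewrite ler_norml => /andP[].
Qed.

Definition Kb (phi : R * R -> C) : R := RI (Bd phi) / NN.

Lemma Kb_ge0 phi : 0 <= Kb phi.
Proof.
rewrite /Kb divr_ge0 ?(ltW NN_gt0) //.
by apply: Rintegral_ge0 => p _; rewrite /Bd addr_ge0 // csq_ge0.
Qed.

Lemma ip_bound e M phi : good e M -> L2 phi ->
  `|complex.Re (ip e phi)| <= M * Kb phi /\ `|complex.Im (ip e phi)| <= M * Kb phi.
Proof.
move=> ge hphi; have gg := ge; case: gg => _ _ M0 _.
have iB : intg (fun p => M * Bd phi p) by apply: intgZ; exact: intg_Bd.
have NN' : `|NN^-1| = NN^-1 by rewrite ger0_norm // invr_ge0 ltW // NN_gt0.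
have E : M * (RI (Bd phi) / NN) = RI (fun p => M * Bd phi p) / NN.
  by rewrite RZ ?mulrA //; exact: intg_Bd.
rewrite /Kb E /ip /cint /= !normrM NN'.
split; rewrite ler_pM2r ?invr_gt0 ?NN_gt0 //; apply: RI_abs_le => //.
- exact: (@intg_Re_cm e phi M).
- by move=> p Tp; case: (@bound_cm e phi M p ge Tp).
- exact: (@intg_Im_cm e phi M).
- by move=> p Tp; case: (@bound_cm e phi M p ge Tp).
Qed.

Lemma Re_cexpi (t : R) : complex.Re (cexpi t) = cos t. Proof. by []. Qed.
Lemma Im_cexpi (t : R) : complex.Im (cexpi t) = sin t. Proof. by []. Qed.
Lemma Re_cexpic (t c : R) : complex.Re (cexpi t * c%:C)%C = cos t * c.
Proof. by rewrite ReM /= mulr0 subr0. Qed.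
Lemma Im_cexpic (t c : R) : complex.Im (cexpi t * c%:C)%C = sin t * c.
Proof. by rewrite ImM /= mulr0 add0r. Qed.

Lemma good_ehat x : good (ehat x) 1.
Proof.
split => //.
- rewrite /ehat; under eq_fun do rewrite Re_cexpi.
  apply: (measurable_funS measurableT) => //; exact: mcos (mdot x).
- rewrite /ehat; under eq_fun do rewrite Im_cexpi.
  apply: (measurable_funS measurableT) => //; exact: msin (mdot x).
- by move=> p _; rewrite /ehat Re_cexpi Im_cexpi cos_max sin_max.
Qed.

Lemma meas_rsum (g : int * int -> R * R -> R) : (forall x, measurable_fun setT (g x)) ->
  measurable_fun setT (fun q => rsum (fun x => g x q)).
Proof.
move=> mg; rewrite /rsum; apply: measurable_funB.
- apply: (measurableT_comp (fine_measurable measurableT)).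
  apply: esum_meas => //; first by move=> x p; rewrite lee_fin le_max lexx orbT.
  move=> x; apply/measurable_EFinP.
  exact: (@measurable_maxr _ _ _ setT (g x) (cst 0) (mg x) (measurable_cst _)).
- apply: (measurableT_comp (fine_measurable measurableT)).
  apply: esum_meas => //; first by move=> x p; rewrite lee_fin le_max lexx orbT.
  move=> x; apply/measurable_EFinP.
  apply: (@measurable_maxr _ _ _ setT (fun q => - g x q) (cst 0) _ (measurable_cst _)).
  exact: measurable_funN.
Qed.

Lemma mdot_shift (a : R * R) x : measurable_fun setT (fun p : R * R => dotZ (a.1 + p.1, a.2 + p.2) x).
Proof.
rewrite /dotZ /=. apply: measurable_funD.
  apply: measurable_funM; last exact: measurable_cst.
  by apply: measurable_funD; [exact: measurable_cst|exact: measurable_fst].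
apply: measurable_funM; last exact: measurable_cst.
by apply: measurable_funD; [exact: measurable_cst|exact: measurable_snd].
Qed.

Definition Sb (b : int * int -> R) : R := fine (\esum_(x in [set: int * int]) (`|b x|)%:E).

Lemma rsum_bound (g b : int * int -> R) : abs_summable b -> (forall x, `|g x| <= `|b x|) -> `|rsum g| <= Sb b.
Proof.
move=> bs gb.
have bs' : abs_summable (fun x => `|b x|) by apply: (abs_summable_le _ _ 1 ler01 _ bs) => x; rewrite normr_id mul1r.
have fS : (\esum_(x in [set: int * int]) (`|b x|)%:E) \is a fin_num.
  by apply: (@esum_fin _ (fun x => `|b x|)) => // x; rewrite normr_ge0 lexx.
have h1 : 0 <= fine (\esum_(x in [set: int * int]) (Num.max (g x) 0)%:E) <= Sb b.
  apply/andP; split; first by apply: fine_ge0; apply: esum_ge0' => x; rewrite le_max lexx orbT.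
  apply: fine_le => //.
    apply: (@esum_fin _ (fun x => `|b x|)) => // x; rewrite le_max lexx orbT /= ge_max normr_ge0 andbT.
    exact: le_trans (ler_norm _) (gb x).
  apply: le_esum => x _; rewrite lee_fin ge_max normr_ge0 andbT; exact: le_trans (ler_norm _) (gb x).
have h2 : 0 <= fine (\esum_(x in [set: int * int]) (Num.max (- g x) 0)%:E) <= Sb b.
  apply/andP; split; first by apply: fine_ge0; apply: esum_ge0' => x; rewrite le_max lexx orbT.
  apply: fine_le => //.
    apply: (@esum_fin _ (fun x => `|b x|)) => // x; rewrite le_max lexx orbT /= ge_max normr_ge0 andbT.
    by have := gb x; rewrite -normrN => h; exact: le_trans (ler_norm _) h.
  apply: le_esum => x _; rewrite lee_fin ge_max normr_ge0 andbT; have := gb x; rewrite -normrN => h; exact: le_trans (ler_norm _) h.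
rewrite rsum_def ler_norml; move: h1 h2 => /andP[h1 h1'] /andP[h2 h2']; apply/andP; split; lra.
Qed.

Lemma Sb_ge0 b : 0 <= Sb b.
Proof. by apply: fine_ge0; apply: esum_ge0' => x. Qed.

Lemma good_d p1 p2 k : abs_summable p1 -> abs_summable p2 -> good (dfun p1 p2 k) (Sb p1 + Sb p2).
Proof.
move=> s1 s2; split.
- rewrite /dfun; under eq_fun do rewrite ReD.
  apply: (measurable_funS measurableT) => //.
  apply: measurable_funD; rewrite /fhat /csum /=; apply: meas_rsum => x;
  (first [apply: measurable_funB | apply: measurable_funD]); apply: measurable_funM;
  (first [exact: mcos (mdot_shift k x) | exact: msin (mdot_shift k x) | exact: measurable_cst
         | exact: mcos (mdot_shift (k.1 / 2, k.2 / 2) x) | exact: msin (mdot_shift (k.1 / 2, k.2 / 2) x)]).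
- rewrite /dfun; under eq_fun do rewrite ImD.
  apply: (measurable_funS measurableT) => //.
  apply: measurable_funD; rewrite /fhat /csum /=; apply: meas_rsum => x;
  (first [apply: measurable_funB | apply: measurable_funD]); apply: measurable_funM;
  (first [exact: mcos (mdot_shift k x) | exact: msin (mdot_shift k x) | exact: measurable_cst
         | exact: mcos (mdot_shift (k.1 / 2, k.2 / 2) x) | exact: msin (mdot_shift (k.1 / 2, k.2 / 2) x)]).
- by rewrite addr_ge0 // Sb_ge0.
- move=> p _; rewrite /dfun ReD ImD /fhat /csum /=; split;
  (apply: (le_trans (ler_normD _ _)); apply: lerD; apply: rsum_bound => // x;
   by rewrite ?mulr0 ?subr0 ?add0r normrM ler_piMl // ?cos_max ?sin_max).
Qed.

Lemma prod_bound (z w : C) K : `|complex.Re z| <= K -> `|complex.Im z| <= K ->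
  `|complex.Re w| <= 1 -> `|complex.Im w| <= 1 ->
  `|complex.Re (z * w)| <= 2 * K /\ `|complex.Im (z * w)| <= 2 * K.
Proof.
move=> h1 h2 h3 h4; rewrite ReM ImM; split.
- apply: (le_trans (ler_normB _ _)); rewrite !normrM.
  have := normr_ge0 (complex.Re z); have := normr_ge0 (complex.Im z).
  have := normr_ge0 (complex.Re w); have := normr_ge0 (complex.Im w). nra.
- apply: (le_trans (ler_normD _ _)); rewrite !normrM.
  have := normr_ge0 (complex.Re z); have := normr_ge0 (complex.Im z).
  have := normr_ge0 (complex.Re w); have := normr_ge0 (complex.Im w). nra.
Qed.

Lemma csummable_A11 (u : int * int -> R) phi p : abs_summable u -> L2 phi ->
  csummable (fun x => (u x)%:C%C * Pproj x phi p).
Proof.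
move=> us hphi.
have B : forall x, `|complex.Re (Pproj x phi p)| <= 2 * Kb phi /\ `|complex.Im (Pproj x phi p)| <= 2 * Kb phi.
  move=> x; rewrite /Pproj; have [b1 b2] := @ip_bound (ehat x) 1 phi (good_ehat x) hphi.
  rewrite mul1r in b1 b2.
  by apply: prod_bound => //; rewrite /ehat ?Re_cexpi ?Im_cexpi ?cos_max ?sin_max.
have K0 : 0 <= 2 * Kb phi by rewrite mulr_ge0 // Kb_ge0.
split; apply: (abs_summable_le _ _ (2 * Kb phi) K0 _ us) => x; case: (B x) => b1 b2.
- rewrite ReM /= mul0r subr0 normrM mulrC ler_wpM2r //.
- rewrite ImM /= mul0r addr0 normrM mulrC ler_wpM2r //.
Qed.

Lemma A11_lin eps (u : int * int -> R) U k phi psi s p : abs_summable u -> L2 phi -> L2 psi ->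
  A11 eps u U k (fun q => phi q + s * psi q) p = A11 eps u U k phi p + s * A11 eps u U k psi p.
Proof.
move=> us hphi hpsi; rewrite /A11.
have -> : (fun x => (u x)%:C%C * Pproj x (fun q => phi q + s * psi q) p) =
  (fun x => (u x)%:C%C * Pproj x phi p + s * ((u x)%:C%C * Pproj x psi p)).
  apply/funext => x; rewrite /Pproj (@ip_lin (ehat x) 1 _ _ _ (good_ehat x)) //; ring.
rewrite csum_lin; try exact: csummable_A11.
rewrite /Pproj (@ip_lin (ehat (0,0)) 1 _ _ _ (good_ehat (0,0))) //; ring.
Qed.

Lemma A11_ae0 eps (u : int * int -> R) U k w p : L2 w -> aeq w (fun _ => 0) ->
  A11 eps u U k w p = (ffun eps k p)%:C%C * w p.
Proof.
move=> hw h0; rewrite /A11 csum0 /Pproj ?(@ip_ae0 (ehat (0,0)) 1 w (good_ehat (0, 0))) //; first by rewrite !mul0r !mulr0 !addr0.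
by move=> x; rewrite (@ip_ae0 (ehat x) 1 w (good_ehat x)) // mul0r mulr0.
Qed.

Lemma csq_lin_bound (a b s : C) :
  csq (a + s * b) <= 2 * csq a + 4 * (complex.Re s ^+ 2 + complex.Im s ^+ 2) * csq b.
Proof.
rewrite /csq ReD ImD ReM ImM.
set a1 := complex.Re a; set a2 := complex.Im a; set b1 := complex.Re b; set b2 := complex.Im b.
set x := complex.Re s; set y := complex.Im s.
have h1 : (a1 + (x * b1 - y * b2)) ^+ 2 <= 2 * a1 ^+ 2 + 2 * (x * b1 - y * b2) ^+ 2.
  have := sqr_ge0 (a1 - (x * b1 - y * b2)); nra.
have h2 : (a2 + (x * b2 + y * b1)) ^+ 2 <= 2 * a2 ^+ 2 + 2 * (x * b2 + y * b1) ^+ 2.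
  have := sqr_ge0 (a2 - (x * b2 + y * b1)); nra.
have h3 : (x * b1 - y * b2) ^+ 2 + (x * b2 + y * b1) ^+ 2 = (x ^+ 2 + y ^+ 2) * (b1 ^+ 2 + b2 ^+ 2).
  by ring.
have h4 : 0 <= (x ^+ 2 + y ^+ 2) * (b1 ^+ 2 + b2 ^+ 2) by rewrite mulr_ge0 // addr_ge0 // sqr_ge0.
nra.
Qed.

Lemma L2_lin phi psi (s : C) : L2 phi -> L2 psi -> L2 (fun p => phi p + s * psi p).
Proof.
move=> hphi hpsi; have [m1 [m2 f1]] := hphi; have [m3 [m4 f2]] := hpsi.
have mR : measurable_fun T2 (fun p => complex.Re (phi p + s * psi p)).
  rewrite (_ : (fun p => _) = (fun p => complex.Re (phi p) + (complex.Re s * complex.Re (psi p) - complex.Im s * complex.Im (psi p)))); last by apply/funext => p; rewrite ReD ReM.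
  apply: measurable_funD => //; apply: measurable_funB; apply: measurable_funM => //; exact: measurable_cst.
have mI : measurable_fun T2 (fun p => complex.Im (phi p + s * psi p)).
  rewrite (_ : (fun p => _) = (fun p => complex.Im (phi p) + (complex.Re s * complex.Im (psi p) + complex.Im s * complex.Re (psi p)))); last by apply/funext => p; rewrite ImD ImM.
  apply: measurable_funD => //; apply: measurable_funD; apply: measurable_funM => //; exact: measurable_cst.
split; [done | split; [done|]].
set c := 4 * (complex.Re s ^+ 2 + complex.Im s ^+ 2).
have ib : intg (fun p => 2 * csq (phi p) + c * csq (psi p)) by apply: intgD; apply: intgZ; apply: intg_csq.
move/integrableP: ib => [_ ib].
apply: le_lt_trans ib.
apply: (@ge0_le_integral _ _ _ lam2 T2 mT2).
- by move=> p _; rewrite lee_fin csq_ge0.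
- apply/measurable_EFinP; rewrite /csq.
  by apply: measurable_funD; apply: measurable_funX.
- apply: measurableT_comp => //; apply/measurable_EFinP.
  apply: measurable_funD; apply: measurable_funM => //; try exact: measurable_cst;
  by rewrite /csq; apply: measurable_funD; apply: measurable_funX.
- move=> p _ /=; rewrite lee_fin (le_trans (csq_lin_bound _ _ _)) //.
  by rewrite ler_norm.
Qed.
End S.

Theorem corollary4p6 (R : realType) (eps hb U : R)
  (u ups p1 p2 : int * int -> R) (k : R * R) (lam : R[i]) :
  0 <= eps -> 0 <= hb -> hb <= 1 / 2 -> 0 <= U ->
  (forall x, 0 <= u x) ->
  rot_invariant u -> rot_invariant ups -> rot_invariant p1 -> rot_invariant p2 ->
  abs_summable u -> abs_summable ups ->
  (exists2 alpha0 : R, 0 < alpha0 &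
     abs_summable (fun x => expR (alpha0 * normZ2 x) * p1 x) /\
     abs_summable (fun x => expR (alpha0 * normZ2 x) * p2 x)) ->
  (forall x : int * int, ~ ((2 %| x.1)%Z /\ (2 %| x.2)%Z) -> p2 x = 0) ->
  (exists x, p1 x + p2 x <> 0) ->
  (forall k' : R * R, T2 k' -> exists x,
     ((p2 x)%:C <> - cexpi (dotZ k' x / 2) * (p1 x)%:C)%C) ->
  T2 k ->
  in_resolvent (A11 eps u U k) lam ->
  A_eigenvalue eps hb u U ups p1 p2 k lam ->
  forall psi : R * R -> R[i], L2 psi ->
    aeq (fun p => A11 eps u U k psi p - lam * psi p) (dfun p1 p2 k) ->
    (* the eigenspace of lam is C g(k,lam), g = (ups^(k) psi, -1) *)
    forall (phi : R * R -> R[i]) (z : R[i]), L2 phi ->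
      (A_eigeq eps hb u U ups p1 p2 k lam phi z <->
       exists c : R[i], aeq phi (fun p => c * (fhat ups k * psi p)) /\ z = c * (-1)).

Proof.
move=> eps0 hb0 hb1 U0 u0 ru rups rp1 rp2 us upss [al al0 [ps1 ps2]] p2even p12 pk Tk res eig psi hpsi hpsiE.
have as_w : forall f : int * int -> R, abs_summable (fun x => expR (al * normZ2 x) * f x) -> abs_summable f.
  move=> f fs; apply: (abs_summable_le _ _ 1 ler01 _ fs) => x; rewrite mul1r normrM ler_peMl //.
  rewrite ger0_norm ?expR_ge0 //; apply: le_trans (expR_ge1Dx _).
  rewrite lerDl; apply: mulr_ge0; [exact: ltW | exact: Num.Theory.sqrtr_ge0].
have s1 := as_w _ ps1; have s2 := as_w _ ps2.
have gd := good_d p1 p2 k s1 s2.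
have forward : forall phi z, L2 phi -> A_eigeq eps hb u U ups p1 p2 k lam phi z ->
    aeq phi (fun p => (- z) * ((fhat ups k) * psi p)).
  move=> phi z hphi [h1 h2].
  set w := fun p => phi p + ((fhat ups k) * z) * psi p.
  have hw : L2 w by apply: L2_lin.
  case: res => inj _ _.
  have w0 : aeq w (fun _ => 0).
    apply: inj => //.
    apply: (aeS2 _ _ _ _ h1 hpsiE) => p e1 e2 Tp.
    rewrite /w A11_lin //.
    have e := e1 Tp; rewrite /A_1 -(e2 Tp) in e.
    have E : A11 eps u U k phi p = lam * phi p - (fhat ups k) * z * (A11 eps u U k psi p - lam * psi p).
      by rewrite -e; ring.
    by rewrite E; ring.
  apply: (aeS _ _ _ w0) => p e Tp; have := e Tp; rewrite /w => /eqP; rewrite addr_eq0 => /eqP ->; ring.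
move=> phi z hphi; split.
  by move=> h; exists (- z); split; [exact: forward | ring].
move=> [c [hc ->]].
set w := fun p => phi p + ((fhat ups k) * (c * -1)) * psi p.
have hw : L2 w by apply: L2_lin.
have w0 : aeq w (fun _ => 0).
  apply: (aeS _ _ _ hc) => p e Tp; rewrite /w (e Tp); ring.
split.
  apply: (aeS3 _ _ _ _ _ hc hpsiE w0) => p e1 e2 e3 Tp.
  have E1 := @A11_lin _ eps u U k phi psi ((fhat ups k) * (c * -1)) p us hphi hpsi.
  have E2 := @A11_ae0 _ eps u U k w p hw w0.
  rewrite /w in E1 E2 e3; rewrite (e3 Tp) mulr0 in E2.
  have E : A11 eps u U k phi p + (fhat ups k) * (c * -1) * A11 eps u U k psi p = 0.
    by rewrite -E2 /w E1.
  rewrite /A_1 -(e2 Tp) (e1 Tp).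
  have -> : A11 eps u U k phi p = -((fhat ups k) * (c * -1)) * A11 eps u U k psi p.
    by apply/eqP; rewrite -subr_eq0 -E; apply/eqP; ring.
  ring.
case: eig => phi0 [z0 [hphi0 [nz eq0]]].
have f0 := forward _ _ hphi0 eq0.
have z00 : z0 != 0.
  apply/eqP => z0E; apply: nz; split => //.
  by apply: (aeS _ _ _ f0) => p e Tp; rewrite (e Tp) z0E oppr0 mul0r.
set t := c / (- z0).
set w' := fun p => phi p + (- t) * phi0 p.
have hw' : L2 w' by apply: L2_lin.
have w0' : aeq w' (fun _ => 0).
  apply: (aeS2 _ _ _ _ hc f0) => p e1 e2 Tp; rewrite /w' (e1 Tp) (e2 Tp) /t.
  by field; rewrite ?oppr_eq0.
have I1 := @ip_ae0 _ (dfun p1 p2 k) _ w' gd hw' w0'.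
rewrite /w' (@ip_lin _ (dfun p1 p2 k) _ phi phi0 (- t) gd hphi hphi0) in I1.
have Iphi : ip (dfun p1 p2 k) phi = t * ip (dfun p1 p2 k) phi0.
  by apply/eqP; rewrite -subr_eq0 -I1; apply/eqP; ring.
case: eq0 => _ eq0; rewrite /A_2 in eq0.
have I0 : (fhat ups k) * ip (dfun p1 p2 k) phi0 = lam * z0 - (bfun eps hb k)%:C%C * z0.
  by rewrite -eq0; ring.
rewrite /A_2 Iphi mulrCA I0 /t.
by field; rewrite ?oppr_eq0.
Qed.
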